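(* Let $T=(S,E)$ be a finite tree to which a unique self-loop has been added at one vertex, and consider simple random walk on it. Then its relaxation time satisfies \[ t_{\rm rel}\le \big(2\,\mathrm{diam}(T)+1\big)|E|. \]
   Context: $|E|$ counts the self-loop as one edge. Degrees count the self-loop twice; simple random walk moves from $v$ along a uniformly chosen edge-end at $v$, so it is irreducible, aperiodic and reversible with respect to $\pi(v)=\deg(v)/\sum_z\deg(z)$. If $1=\lambda_1>\lambda_2\ge\dots\ge\lambda_{|S|}>-1$ are the eigenvalues of its transition matrix, the absolute spectral gap is $\gamma_*=1-\max_{i\ge2}|\lambda_i|$ and the relaxation time is $t_{\rm rel}=1/\gamma_*$. $\mathrm{diam}(T)$ is the maximal graph distance between two vertices. *)

(* Defs.v *)
From HB Require Import structures.
From mathcomp Require Import all_boot all_order all_algebra.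
Set Implicit Arguments. Unset Strict Implicit. Unset Printing Implicit Defensive.
Import Order.TTheory GRing.Theory Num.Theory.
Local Open Scope ring_scope.

Section TreeDefs.
Variable n : nat.
Implicit Types (e : rel 'I_n) (o x y : 'I_n).

Definition simple_graph e := symmetric e /\ irreflexive e.

(* No simple cycle (of length >= 3). *)
Definition acyclic e :=
  forall (x : 'I_n) (p : seq 'I_n),
    path e x p -> uniq (x :: p) -> (2 <= size p)%N -> ~~ e (last x p) x.

Definition connected_graph e := forall x y, connect e x y.

Definition is_tree e := [/\ simple_graph e, connected_graph e & acyclic e].

Definition n_tree_edges e : nat :=
  #|[set pr : 'I_n * 'I_n | e pr.1 pr.2 && (pr.1 < pr.2)%N]|.

(* |E| for the tree with one self-loop added: the loop counts as one edge. *)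
Definition n_edges_loop e : nat := (n_tree_edges e).+1.

Fixpoint ball e k x : {set 'I_n} :=
  if k is k'.+1 then ball e k' x :|: [set z | [exists y in ball e k' x, e y z]]
  else [set x].

(* Graph distance (for a connected graph on n vertices it is < n). *)
Definition gdist e x y : nat := find (fun k => y \in ball e k x) (iota 0 n).

Definition diam e : nat := \max_(x : 'I_n) \max_(y : 'I_n) gdist e x y.

Definition deg_loop e o x : nat := #|[set y | e x y]| + (x == o) * 2.

(* Transition matrix of simple random walk on the tree plus a self-loop at o:
   moves along a uniformly chosen edge-end. *)
Definition srw_loop (R : realFieldType) e o : 'M[R]_n :=
  \matrix_(x, y) (((e x y)%:R + ((x == o) && (y == o))%:R * 2) / (deg_loop e o x)%:R).

End TreeDefs.

(* Absolute spectral gap, given the eigenvalues (with multiplicity) s: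
   1 - max_{i>=2} |lambda_i|, where one copy of the eigenvalue 1 is removed. *)
Definition abs_gap (R : realFieldType) (s : seq R) : R :=
  1 - \big[Num.max/0]_(x <- rem 1 s) `|x|.

Definition t_rel (R : realFieldType) (s : seq R) : R := (abs_gap s)^-1.

(* Main.v *)
Require Import Defs.
From HB Require Import structures.
From mathcomp Require Import all_boot all_order all_algebra.
From mathcomp Require Import ring lra.
Import Order.TTheory GRing.Theory Num.Theory.
Set Implicit Arguments. Unset Strict Implicit. Unset Printing Implicit Defensive.

Section Graph.
Variable n : nat.
Variable e : rel 'I_n.

Lemma ball_path k x y : y \in ball e k x ->
  exists p, [/\ path e x p, last x p = y & size p <= k].
Proof.
elim: k y => [|k IH] y /=.
  by rewrite inE => /eqP ->; exists [::].
rewrite inE => /orP[/IH [p [P1 P2 P3]]|].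
  by exists p; split=> //; apply: leqW.
rewrite inE => /exists_inP [z /IH [p [P1 P2 P3]] ezy].
exists (rcons p y); rewrite rcons_path last_rcons size_rcons P1 /= P2 ezy.
by split.
Qed.

Lemma path_ball x p : path e x p -> last x p \in ball e (size p) x.
Proof.
elim/last_ind: p => [|p z IH] /=; first by rewrite inE.
rewrite rcons_path last_rcons size_rcons => /andP[/IH H ez] /=.
rewrite inE; apply/orP; right; rewrite inE; apply/exists_inP.
by exists (last x p).
Qed.

Lemma gdist_ball x y : connect e x y -> y \in ball e (gdist e x y) x.
Proof.
move=> /connectP [q Pq ->].
case: (shortenP Pq) => p Pp Up _.
have Hh : has (fun k => last x p \in ball e k x) (iota 0 n).
  apply/hasP; exists (size p); last exact: path_ball.
  rewrite mem_iota add0n /=.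
  have := card_uniqP Up => /= Hc.
  have := max_card (mem (x :: p)); rewrite Hc card_ord /=.
  done.
have := nth_find 0 Hh; rewrite /gdist nth_iota ?add0n //.
by move: Hh; rewrite has_find size_iota.
Qed.

Lemma short_path x y : connect e x y ->
  exists p, [/\ path e x p, last x p = y, uniq (x :: p) & size p <= gdist e x y].
Proof.
move=> /gdist_ball /ball_path [q [Pq Lq Sq]].
rewrite -Lq in Sq *; move: Sq.
case: (shortenP Pq) => p Pp Up Sub Sq.
exists p; split=> //.
apply: (leq_trans _ Sq); apply: uniq_leq_size => //.
by case/andP: Up.
Qed.

Lemma gdist_diam x y : gdist e x y <= diam e.
Proof.
rewrite /diam; apply: leq_trans (leq_bigmax x).
exact: (leq_bigmax y).
Qed.

End Graph.

Section Count.
Variable n : nat.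
Variable e : rel 'I_n.
Hypothesis esym : symmetric e.
Hypothesis eirr : irreflexive e.

Lemma sum_adj : \sum_x \sum_y (e x y : nat) = 2 * n_tree_edges e.
Proof.
have -> : n_tree_edges e = \sum_x \sum_y ((e x y && (x < y)%N) : nat).
  rewrite /n_tree_edges -sum1_card pair_big /= big_mkcond /=.
  by apply: eq_bigr => -[x y] _; rewrite inE /=; case: (_ && _).
have -> : \sum_x \sum_y (e x y : nat) =
   \sum_x \sum_y ((e x y && (x < y)%N) : nat) +
   \sum_x \sum_y ((e x y && (y < x)%N) : nat).
  rewrite -big_split /=; apply: eq_bigr => x _.
  rewrite -big_split /=; apply: eq_bigr => y _.
  case exy: (e x y) => //=.
  case: (ltngtP x y) => // /val_inj Exy.
  by rewrite Exy eirr in exy.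
rewrite mul2n -addnn; congr (_ + _).
rewrite exchange_big /=; apply: eq_bigr => x _; apply: eq_bigr => y _.
by rewrite esym.
Qed.

End Count.

Local Open Scope ring_scope.
Lemma aux (R : realFieldType) (a b t S : R) : 0 <= t -> 0 <= S -> b ^+ 2 <= t * S ->
  (a + b) ^+ 2 <= (1 + t) * (a ^+ 2 + S).
Proof.
move=> t0 S0 H.
have [t0'|tp] := eqVneq t 0.
  subst t; rewrite mul0r in H.
  have b0 : b = 0.
    by apply/eqP; rewrite -sqrf_eq0 eq_le H sqr_ge0.
  rewrite b0 addr0 addr0 mul1r; lra.
have tpos : 0 < t by rewrite lt_def tp t0.
have : 0 <= (t * a - b) ^+ 2 by apply: sqr_ge0.
move=> Hs.
have : 0 <= t * ((1 + t) * (a ^+ 2 + S) - (a + b) ^+ 2).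
  nra.
by rewrite pmulr_rge0 // subr_ge0.
Qed.
Lemma fin (R : realFieldType) (w D l : R) : 1 <= w -> 0 <= D ->
  1 <= 2 * w * D * (1 - l) -> 1 <= 2 * w * (D + 1/4) * (1 + l) ->
  1 <= (2 * D + 1) * w * (1 - l) /\ 1 <= (2 * D + 1) * w * (1 + l).
Proof. move=> *; split; nra. Qed.

Fixpoint pairsum (R : realFieldType) n (G : 'I_n -> 'I_n -> R) x p :=
  if p is y :: p' then G x y + pairsum G y p' else 0.

Lemma pairsum_ge0 (R : realFieldType) n (G : 'I_n -> 'I_n -> R) x p :
  (forall a b, 0 <= G a b) -> 0 <= pairsum G x p.
Proof.
move=> G0; elim: p x => [|y p IH] x //=.
by apply: addr_ge0.
Qed.

Section Analysis.
Variables (R : realFieldType) (n : nat) (e : rel 'I_n) (o : 'I_n).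
Hypothesis esym : symmetric e.
Hypothesis eirr : irreflexive e.
Hypothesis conn : forall x y, connect e x y.

Definition dg x : R := (deg_loop e o x)%:R.

Lemma sum_delta (g : 'I_n -> R) : \sum_x (x == o)%:R * g x = g o.
Proof.
rewrite (bigD1 o) //= eqxx mul1r big1 ?addr0 // => x /negPf ->.
by rewrite mul0r.
Qed.

Lemma dg_eq x : dg x = \sum_y (e x y)%:R + (x == o)%:R * 2.
Proof.
rewrite /dg /deg_loop natrD natrM; congr (_ + _).
rewrite -sum1_card natr_sum big_mkcond /=; apply: eq_bigr => y _.
by rewrite inE; case: (e x y).
Qed.

Lemma dg_pos x : 0 < dg x.
Proof.
rewrite /dg ltr0n /deg_loop.
have [->|xo] := eqVneq x o; first by rewrite mul1n addn2.
rewrite mul0n addn0 card_gt0; apply/set0Pn.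
move: (conn x o) => /connectP [[|y p] /= Pp Lp]; first by rewrite Lp eqxx in xo.
by exists y; rewrite inE; case/andP: Pp.
Qed.

Definition H (g : 'I_n -> 'I_n -> R) := \sum_x \sum_y (e x y)%:R * g x y.

Lemma Hlin g1 g2 : H g1 + H g2 = H (fun x y => g1 x y + g2 x y).
Proof.
rewrite /H -big_split; apply: eq_bigr => x _; rewrite -big_split.
by apply: eq_bigr => y _; rewrite mulrDr.
Qed.

Lemma Hscal c g : c * H g = H (fun x y => c * g x y).
Proof.
rewrite /H mulr_sumr; apply: eq_bigr => x _; rewrite mulr_sumr.
by apply: eq_bigr => y _; rewrite mulrCA.
Qed.

Lemma Hext g1 g2 : (forall x y, g1 x y = g2 x y) -> H g1 = H g2.
Proof.
by move=> E; apply: eq_bigr => x _; apply: eq_bigr => y _; rewrite E.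
Qed.

Lemma Hswap g : H g = H (fun x y => g y x).
Proof.
rewrite /H exchange_big; apply: eq_bigr => x _; apply: eq_bigr => y _.
by rewrite esym.
Qed.

Lemma H_ge0 g : (forall x y, 0 <= g x y) -> 0 <= H g.
Proof.
move=> g0; apply: sumr_ge0 => x _; apply: sumr_ge0 => y _.
by apply: mulr_ge0; rewrite ?ler0n.
Qed.

Lemma sum_seq_le (F : 'I_n -> R) L : uniq L -> (forall a, 0 <= F a) ->
  \sum_(a <- L) F a <= \sum_a F a.
Proof.
move=> uL F0; rewrite big_uniq //= [X in _ <= X](bigID (mem L)) /=.
by rewrite lerDl; apply: sumr_ge0.
Qed.

Lemma pairsum_seq (G : 'I_n -> 'I_n -> R) x p : (forall a b, G a b = G b a) ->
  (forall a b, 0 <= G a b) -> path e x p ->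
  2 * pairsum G x p <= \sum_(a <- x :: p) \sum_(b <- x :: p) (e a b)%:R * G a b.
Proof.
move=> Gs G0.
have E0 : forall a b, 0 <= (e a b)%:R * G a b by move=> a b; rewrite mulr_ge0 ?ler0n.
elim: p x => [|y p IH] x /=.
  by move=> _; rewrite mulr0; apply: sumr_ge0 => a _; apply: sumr_ge0.
case/andP => exy Pp.
set L := y :: p.
have -> : \sum_(a <- x :: L) \sum_(b <- x :: L) (e a b)%:R * G a b =
  ((e x x)%:R * G x x + \sum_(a <- L) (e a x)%:R * G a x) +
  (\sum_(b <- L) (e x b)%:R * G x b +
   \sum_(a <- L) \sum_(b <- L) (e a b)%:R * G a b).
  rewrite (eq_bigr (fun a => (e a x)%:R * G a x + \sum_(b <- L) (e a b)%:R * G a b));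
    last by move=> a _; rewrite big_cons.
  by rewrite big_split /= !big_cons.
have h1 : G x y <= \sum_(a <- L) (e a x)%:R * G a x.
  rewrite /L big_cons esym exy mul1r Gs lerDl.
  by apply: sumr_ge0.
have h2 : G x y <= \sum_(b <- L) (e x b)%:R * G x b.
  rewrite /L big_cons exy mul1r lerDl.
  by apply: sumr_ge0.
have h3 := IH y Pp.
have h4 := E0 x x.
rewrite /L /= in h3; lra.
Qed.

Lemma pair_H (G : 'I_n -> 'I_n -> R) x p : (forall a b, G a b = G b a) ->
  (forall a b, 0 <= G a b) -> path e x p -> uniq (x :: p) ->
  2 * pairsum G x p <= H G.
Proof.
move=> Gs G0 Pp Up.
have E0 : forall a b, 0 <= (e a b)%:R * G a b by move=> a b; rewrite mulr_ge0 ?ler0n.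
apply: (le_trans (pairsum_seq Gs G0 Pp)).
have K2 := @sum_seq_le (fun a => \sum_b (e a b)%:R * G a b) (x :: p) Up
  (fun a => sumr_ge0 _ (fun b _ => E0 a b)).
apply: (le_trans _ K2).
apply: ler_sum => a _; exact: sum_seq_le.
Qed.

Variables (f : 'I_n -> R) (lam : R).
Hypothesis Heq : forall y,
  \sum_x f x * ((e x y)%:R + ((x == o) && (y == o))%:R * 2) = lam * (dg y * f y).
Hypothesis Hmean : \sum_x dg x * f x = 0.
Hypothesis Hnz : exists x, f x != 0.

Definition Sdf := \sum_x dg x * f x ^+ 2.

Lemma I1 : Sdf = H (fun x y => f x ^+ 2) + 2 * f o ^+ 2.
Proof.
rewrite /Sdf; under eq_bigr do rewrite dg_eq mulrDl.
rewrite big_split /=; congr (_ + _).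
  by apply: eq_bigr => x _; rewrite mulr_suml.
under eq_bigr do rewrite -mulrA.
by rewrite sum_delta.
Qed.

Lemma I2 : lam * Sdf = H (fun x y => f x * f y) + 2 * f o ^+ 2.
Proof.
rewrite /Sdf mulr_sumr.
transitivity (\sum_y f y * (lam * (dg y * f y))).
  by apply: eq_bigr => y _; rewrite expr2; ring.
under eq_bigr do rewrite -Heq.
have step : forall y, f y * (\sum_x f x * ((e x y)%:R + ((x == o) && (y == o))%:R * 2))
   = \sum_x (e x y)%:R * (f x * f y) + (y == o)%:R * (f y * (f o * 2)).
  move=> y; rewrite mulr_sumr.
  have [->|yo] := eqVneq y o.
    rewrite mul1r.
    under eq_bigr do rewrite andbT mulrDr mulrDr.
    rewrite big_split /=; congr (_ + _).
      by apply: eq_bigr => x _; ring.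
    rewrite (eq_bigr (fun i => (i == o)%:R * (f o * (f i * 2)))); last first.
      by move=> i _; ring.
    by rewrite sum_delta.
  rewrite mul0r addr0.
  by apply: eq_bigr => x _; rewrite andbF mul0r addr0; ring.
under eq_bigr do rewrite step.
rewrite big_split /= sum_delta /H exchange_big /=.
congr (_ + _); ring.
Qed.

Definition Gm := fun a b => (f a - f b) ^+ 2.
Definition Gp := fun a b => (f a + f b) ^+ 2.

Lemma Hsq : H (fun x y => f y ^+ 2) = H (fun x y => f x ^+ 2).
Proof. by rewrite Hswap. Qed.

Lemma Iminus : 2 * (Sdf - lam * Sdf) = H Gm.
Proof.
have -> : H Gm = H (fun x y => f x ^+ 2) + (H (fun x y => f y ^+ 2) +
      (-2) * H (fun x y => f x * f y)).
  rewrite Hscal !Hlin; apply: Hext => x y /=; rewrite /Gm; ring.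
rewrite Hsq I2 I1; ring.
Qed.

Lemma Iplus : 2 * (Sdf + lam * Sdf) = H Gp + 8 * f o ^+ 2.
Proof.
have -> : H Gp = H (fun x y => f x ^+ 2) + (H (fun x y => f y ^+ 2) +
      2 * H (fun x y => f x * f y)).
  rewrite Hscal !Hlin; apply: Hext => x y /=; rewrite /Gp; ring.
rewrite Hsq I2 I1; ring.
Qed.

Lemma path_minus x p :
  (f x - f (last x p)) ^+ 2 <= (size p)%:R * pairsum Gm x p.
Proof.
elim: p x => [|y p IH] x /=; first by rewrite subrr expr2 mulr0.
have S0 : 0 <= pairsum Gm y p by apply: pairsum_ge0 => a b; exact: sqr_ge0.
have := aux (f x - f y) (ler0n R (size p)) S0 (IH y).
have -> : f x - f y + (f y - f (last y p)) = f x - f (last y p) by ring.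
by rewrite mulrS.
Qed.

Lemma path_plus x p :
  f x ^+ 2 <= ((size p)%:R + 4^-1) * (pairsum Gp x p + 4 * f (last x p) ^+ 2).
Proof.
have h4 : 4^-1 * 4 = 1 :> R by rewrite mulVf // pnatr_eq0.
elim: p x => [|y p IH] x /=.
  by rewrite !add0r mulrA h4 mul1r.
have S0 : 0 <= pairsum Gp y p + 4 * f (last y p) ^+ 2.
  apply: addr_ge0; first by apply: pairsum_ge0 => a b; exact: sqr_ge0.
  by apply: mulr_ge0; rewrite ?ler0n ?sqr_ge0.
have t0 : 0 <= (size p)%:R + 4^-1 :> R by rewrite addr_ge0 ?ler0n ?invr_ge0 ?ler0n.
have hb : (- f y) ^+ 2 <= ((size p)%:R + 4^-1) * (pairsum Gp y p + 4 * f (last y p) ^+ 2).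
  by rewrite sqrrN; exact: IH.
have := aux (f x + f y) t0 S0 hb.
rewrite addrK => h.
apply: (le_trans h); rewrite le_eqVlt; apply/orP; left; apply/eqP.
by rewrite mulrS /Gp; ring.
Qed.

Lemma Gm_sym a b : Gm a b = Gm b a. Proof. by rewrite /Gm; ring. Qed.
Lemma Gp_sym a b : Gp a b = Gp b a. Proof. by rewrite /Gp; ring. Qed.
Lemma Gm_ge0 a b : 0 <= Gm a b. Proof. exact: sqr_ge0. Qed.
Lemma Gp_ge0 a b : 0 <= Gp a b. Proof. exact: sqr_ge0. Qed.

Lemma bound_minus x : 2 * (f x - f o) ^+ 2 <= (diam e)%:R * H Gm.
Proof.
have [p [Pp Lp Up Sp]] := short_path (conn x o).
have Dp : (size p <= diam e)%N := leq_trans Sp (gdist_diam _ _ _).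
have h1 := path_minus x p; rewrite Lp in h1.
have h2 := pair_H Gm_sym Gm_ge0 Pp Up.
have h3 : (size p)%:R <= (diam e)%:R :> R by rewrite ler_nat.
have h4 : 0 <= pairsum Gm x p by apply: pairsum_ge0; exact: Gm_ge0.
have h5 : 0 <= (diam e)%:R :> R := ler0n _ _.
have h6 := ler_wpM2r h4 h3.
have h7 := ler_wpM2l h5 h2.
lra.
Qed.

Lemma bound_plus x : 8 * f x ^+ 2 <= (4 * (diam e)%:R + 1) * (H Gp + 8 * f o ^+ 2).
Proof.
have [p [Pp Lp Up Sp]] := short_path (conn x o).
have Dp : (size p <= diam e)%N := leq_trans Sp (gdist_diam _ _ _).
have h1 := path_plus x p; rewrite Lp in h1.
have h2 := pair_H Gp_sym Gp_ge0 Pp Up.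
have h3 : (size p)%:R <= (diam e)%:R :> R by rewrite ler_nat.
have h4 : 0 <= pairsum Gp x p by apply: pairsum_ge0; exact: Gp_ge0.
have h5 : 0 <= (size p)%:R :> R := ler0n _ _.
have h6 : 0 <= f o ^+ 2 := sqr_ge0 _.
have h4i : 4^-1 * 4 = 1 :> R by rewrite mulVf // pnatr_eq0.
move: h1; set c := 4^-1 => h1.
have c0 : 0 <= c by rewrite invr_ge0 ler0n.
set D := (diam e)%:R in h3 *.
set Q := pairsum Gp x p + 4 * f o ^+ 2 in h1.
have hQ : 0 <= Q by rewrite /Q; apply: addr_ge0 => //; apply: mulr_ge0; rewrite ?ler0n.
have h7 : ((size p)%:R + c) * Q <= (D + c) * Q by apply: ler_wpM2r => //; rewrite lerD2r.
have hcQ : 8 * ((D + c) * Q) = (4 * D + 1) * (2 * Q).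
  have -> : 8 * ((D + c) * Q) = 8 * D * Q + 2 * (c * 4) * Q by ring.
  by rewrite h4i; ring.
have D0 : 0 <= 4 * D + 1 by apply: addr_ge0; rewrite ?mulr_ge0 ?ler0n.
have h8 : (4 * D + 1) * (2 * Q) <= (4 * D + 1) * (H Gp + 8 * f o ^+ 2).
  by apply: ler_wpM2l => //; rewrite /Q; lra.
lra.
Qed.

Lemma W_eq : \sum_x dg x = 2 * (n_edges_loop e)%:R.
Proof.
under eq_bigr do rewrite dg_eq.
rewrite big_split /= sum_delta.
have -> : \sum_x \sum_y (e x y)%:R = (\sum_x \sum_y (e x y : nat))%:R :> R.
  by rewrite natr_sum; apply: eq_bigr => x _; rewrite natr_sum.
rewrite sum_adj // /n_edges_loop mulrS natrM; ring.
Qed.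

Lemma Sdf_pos : 0 < Sdf.
Proof.
case: Hnz => x0 fx0.
rewrite /Sdf (bigD1 x0) //=.
have h1 : 0 < dg x0 * f x0 ^+ 2.
  by apply: mulr_gt0; rewrite ?dg_pos // exprn_even_gt0 // fx0 orbT.
have h2 : 0 <= \sum_(i < n | i != x0) dg i * f i ^+ 2.
  by apply: sumr_ge0 => i _; apply: mulr_ge0; rewrite ?sqr_ge0 // ltW ?dg_pos.
lra.
Qed.

Lemma gap_minus : 1 <= 2 * (n_edges_loop e)%:R * (diam e)%:R * (1 - lam).
Proof.
set W := \sum_x dg x.
have hA : \sum_x dg x * (f x - f o) ^+ 2 = Sdf + f o ^+ 2 * W.
  rewrite /W /Sdf mulr_sumr -big_split /=.
  have E : forall x, dg x * (f x - f o) ^+ 2 =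
     (dg x * f x ^+ 2 + f o ^+ 2 * dg x) - (2 * f o) * (dg x * f x) by move=> x; ring.
  under eq_bigr do rewrite E.
  by rewrite sumrB -mulr_sumr Hmean mulr0 subr0.
have hB : 2 * \sum_x dg x * (f x - f o) ^+ 2 <= W * ((diam e)%:R * H Gm).
  rewrite mulr_sumr /W mulr_suml; apply: ler_sum => x _.
  have := bound_minus x; have := dg_pos x => d0 b.
  nra.
have hC := Iminus.
have hW : 0 <= W by apply: sumr_ge0 => x _; exact: ltW (dg_pos x).
have hf : 0 <= f o ^+ 2 * W by apply: mulr_ge0; rewrite ?sqr_ge0.
have hS := Sdf_pos.
have hWE := W_eq; rewrite -/W in hWE.
rewrite -hWE.
have : Sdf * 1 <= Sdf * (W * (diam e)%:R * (1 - lam)).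
  rewrite hA in hB; rewrite -hC in hB; nra.
by rewrite ler_pM2l.
Qed.

Lemma gap_plus : 1 <= 2 * (n_edges_loop e)%:R * ((diam e)%:R + 4^-1) * (1 + lam).
Proof.
set W := \sum_x dg x.
have hB : 8 * Sdf <= W * ((4 * (diam e)%:R + 1) * (H Gp + 8 * f o ^+ 2)).
  rewrite /Sdf mulr_sumr /W mulr_suml; apply: ler_sum => x _.
  have := bound_plus x; have := dg_pos x => d0 b.
  nra.
have hC := Iplus.
have hS := Sdf_pos.
have hWE := W_eq; rewrite -/W in hWE.
rewrite -hWE.
have h4i : 4^-1 * 4 = 1 :> R by rewrite mulVf // pnatr_eq0.
set c := 4^-1 in h4i *.
have : Sdf * 1 <= Sdf * (W * ((diam e)%:R + c) * (1 + lam)).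
  rewrite -hC in hB; nra.
by rewrite ler_pM2l.
Qed.

Lemma lam_bound : `|lam| <= 1 - ((2 * diam e + 1) * n_edges_loop e)%:R^-1.
Proof.
have h1 := gap_minus.
have h2 := gap_plus.
set w := (n_edges_loop e)%:R in h1 h2.
set D := (diam e)%:R in h1 h2.
have w1 : 1 <= w by rewrite /w ler1n.
have D0 : 0 <= D by rewrite /D ler0n.
have h4i : 4^-1 * 4 = 1 :> R by rewrite mulVf // pnatr_eq0.
set c := 4^-1 in h4i h2.
have h2' : 1 <= 2 * w * (D + 1/4) * (1 + lam).
  have -> : 1 / 4 = c :> R by rewrite mul1r.
  exact: h2.
have [k1 k2] := fin w1 D0 h1 h2'.
have -> : ((2 * diam e + 1) * n_edges_loop e)%:R = (2 * D + 1) * w :> R.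
  by rewrite natrM natrD natrM.
set K := (2 * D + 1) * w in k1 k2 *.
have K0 : 0 < K by rewrite /K; nra.
have KK : K^-1 * K = 1 by rewrite mulVf // gt_eqF.
have Ki : 0 < K^-1 by rewrite invr_gt0.
rewrite ler_norml; apply/andP; split; nra.
Qed.

End Analysis.

Set Implicit Arguments. Unset Strict Implicit. Unset Printing Implicit Defensive.
Local Open Scope ring_scope.

Section LinAlg.
Variables (R : realFieldType) (m : nat).
Local Notation n := m.+1.
Variables (e : rel 'I_n) (o : 'I_n).
Hypothesis esym : symmetric e.
Hypothesis eirr : irreflexive e.
Hypothesis conn : forall x y, connect e x y.

Local Notation A := (srw_loop R e o).
Definition Nm : 'M[R]_n := \matrix_(i, j) ((j == ord0) && (i != ord0))%:R.
Definition Sm : 'M[R]_n := 1%:M + Nm.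
Definition Tm : 'M[R]_n := 1%:M - Nm.

Lemma NN : Nm *m Nm = 0.
Proof.
apply/matrixP => i j; rewrite !mxE big1 // => k _; rewrite !mxE.
by case: (k == ord0); rewrite ?andbF ?mulr0 ?mul0r.
Qed.

Lemma TS : Tm *m Sm = 1%:M.
Proof.
by rewrite /Tm /Sm mulmxDr !mulmxBl !mul1mx mulmx1 NN subr0 subrK.
Qed.

Lemma ST : Sm *m Tm = 1%:M.
Proof. exact: mulmx1C TS. Qed.

Lemma rowsumA x : \sum_y A x y = 1.
Proof.
under eq_bigr do rewrite mxE.
rewrite -mulr_suml big_split /=.
have -> : \sum_y ((x == o) && (y == o))%:R * 2 = (x == o)%:R * 2 :> R.
  case: (eqVneq x o) => _ /=.
    rewrite (bigD1 o) //= eqxx big1 ?addr0 // => y /negPf ->; by rewrite mul0r.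
  by rewrite mul0r big1 // => y _; rewrite mul0r.
rewrite -dg_eq; exact: divff (lt0r_neq0 (dg_pos R o conn x)).
Qed.

Lemma rowsumT i : \sum_j Tm i j = (i == ord0)%:R.
Proof.
under eq_bigr do rewrite !mxE.
rewrite sumrB (bigD1 i) //= ?eqxx big1 ?addr0; last first.
  by move=> j /negPf; rewrite eq_sym => ->.
rewrite (bigD1 ord0) //= ?eqxx /= big1 ?addr0; last first.
  by move=> j /negPf ->.
by case: (i == ord0); rewrite ?subrr ?subr0.
Qed.

Definition Mm := Tm *m A *m Sm.

Lemma Mcol0 i : Mm i ord0 = (i == ord0)%:R.
Proof.
rewrite /Mm mxE.
have -> : \sum_j (Tm *m A) i j * Sm j ord0 = \sum_j (Tm *m A) i j.
  apply: eq_bigr => j _; rewrite !mxE eqxx /=.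
  by case: (j == ord0) => /=; rewrite ?addr0 ?add0r mulr1.
under eq_bigr do rewrite mxE.
rewrite exchange_big /=.
under eq_bigr do rewrite -mulr_sumr rowsumA mulr1.
exact: rowsumT.
Qed.

Lemma char_sim : char_poly Mm = char_poly A.
Proof.
rewrite /char_poly /char_poly_mx /Mm.
have TSp : map_mx polyC Tm *m map_mx polyC Sm = 1%:M.
  by rewrite -map_mxM TS map_mx1.
have -> : 'X%:M - map_mx polyC (Tm *m A *m Sm) =
    map_mx polyC Tm *m ('X%:M - map_mx polyC A) *m map_mx polyC Sm.
  have HX : map_mx polyC Tm *m 'X%:M *m map_mx polyC Sm = 'X%:M.
    by rewrite scalar_mxC -mulmxA TSp mulmx1.
  by rewrite !map_mxM mulmxBr mulmxBl HX.
by rewrite !det_mulmx mulrAC -det_mulmx TSp det1 mul1r.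
Qed.

Definition Bm := row' ord0 (col' ord0 Mm).

Lemma char_expand : char_poly Mm = ('X - 1%:P) * char_poly Bm.
Proof.
rewrite /char_poly (expand_det_col _ ord0) (bigD1 ord0) //= big1 ?addr0; last first.
  move=> i i0; have := Mcol0 i; rewrite /Mm !mxE => ->.
  by rewrite (negPf i0) /= mulr0n subr0 mul0r.
have := Mcol0 ord0; rewrite /Mm !mxE => ->.
rewrite eqxx /= mulr1n /cofactor -/Mm row'_col'_char_poly_mx.
by rewrite expr0 mul1r.
Qed.

Definition Kc : R := ((2 * diam e + 1) * n_edges_loop e)%:R.

Lemma lift_eig (x : R) : root (char_poly Bm) x -> `|x| <= 1 - Kc^-1.
Proof.
rewrite -eigenvalue_root_char => /eigenvalueP [v Hv v0].
pose w : 'rV[R]_n := \row_i (if unlift ord0 i is Some k then v 0 k else 0).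
have w0 : w 0 ord0 = 0 by rewrite mxE unlift_none.
have wl k : w 0 (lift ord0 k) = v 0 k by rewrite mxE liftK.
have Hw : w *m Mm = x *: w.
  apply/rowP => j; rewrite !mxE big_ord_recl w0 mul0r add0r.
  case: (unliftP ord0 j) => [j'|] ->.
    under eq_bigr do rewrite wl.
    have := congr1 (fun u : 'rV[R]_m => u 0 j') Hv; rewrite !mxE => <-.
    by apply: eq_bigr => k _; rewrite !mxE.
  rewrite mulr0 big1 // => k _.
  by rewrite Mcol0 eq_sym (negPf (neq_lift _ _)) mulr0.
have wn0 : w != 0.
  apply/negP => /eqP w0'; move/negP: v0; apply; apply/eqP/rowP => k.
  have := congr1 (fun u : 'rV[R]_n => u 0 (lift ord0 k)) w0'.
  by rewrite wl !mxE.
pose mu := w *m Tm.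
have Hmu : mu *m A = x *: mu.
  have E : Tm *m A = Mm *m Tm by rewrite /Mm -mulmxA ST mulmx1.
  by rewrite /mu -mulmxA E mulmxA Hw -scalemxAl.
have mu0 : mu != 0.
  apply/negP => /eqP Hm; move/negP: wn0; apply; apply/eqP.
  by rewrite -[w]mulmx1 -TS mulmxA -/mu Hm mul0mx.
have Hsum : \sum_i mu 0 i = 0.
  under eq_bigr do rewrite mxE.
  rewrite exchange_big /=.
  under eq_bigr do rewrite -mulr_sumr rowsumT.
  rewrite (bigD1 ord0) //= ?eqxx mulr1 w0 add0r big1 // => i /negPf ->.
  by rewrite mulr0.
have dn0 i : dg R e o i != 0 by exact: lt0r_neq0 (dg_pos R o conn i).
pose f i := mu 0 i / dg R e o i.
apply: (lam_bound (o:=o) esym eirr conn (f:=f) (lam:=x)).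
- move=> y; have := congr1 (fun u : 'rV[R]_n => u 0 y) Hmu; rewrite !mxE => Hy.
  have E : mu 0 y = \sum_j w 0 j * Tm j y by rewrite mxE.
  rewrite -E in Hy.
  rewrite /f [dg _ _ _ y * _]mulrC divfK // -Hy.
  by apply: eq_bigr => i _; rewrite !mxE /dg; ring.
- rewrite -[RHS]Hsum; apply: eq_bigr => i _; by rewrite /f mulrC divfK.
- case: (pickP (fun i => mu 0 i != 0)) => [i mi | none].
    by exists i; rewrite /f mulf_neq0 // invr_eq0.
  exfalso; move/negP: mu0; apply; apply/eqP/rowP => i.
  by move: (none i) => /= /negbFE/eqP ->; rewrite mxE.
Qed.

End LinAlg.

Local Open Scope ring_scope.

Unset Implicit Arguments.

Theorem mainTheorem7 (R : realFieldType) (n : nat) (e : rel 'I_n) (o : 'I_n)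
    (s : seq R) :
  is_tree e ->
  char_poly (srw_loop R e o) = \prod_(x <- s) ('X - x%:P) ->
  0 < abs_gap s /\
  t_rel s <= ((2 * diam e + 1) * n_edges_loop e)%:R.
Proof.
case: n e o => [|m] e o; first by case: o.
move=> [[esym eirr] conn _] Hs.
have Hc : \prod_(x <- s) ('X - x%:P) = ('X - 1%:P) * char_poly (Bm R e o).
  by rewrite -Hs -(char_sim R e o) (char_expand R o conn).
have s1 : 1 \in s by rewrite -root_prod_XsubC Hc rootM root_XsubC eqxx.
have Hr : char_poly (Bm R e o) = \prod_(x <- rem 1 s) ('X - x%:P).
  apply: (@mulfI _ ('X - 1%:P)); first by rewrite polyXsubC_eq0.
  by rewrite -Hc (perm_big _ (perm_to_rem s1)) big_cons.
have Hall : forall x, x \in rem 1 s -> `|x| <= 1 - (Kc R e)^-1.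
  move=> x xs; apply: (lift_eig (o:=o) esym eirr conn).
  by rewrite Hr root_prod_XsubC.
have K1 : 1 <= Kc R e.
  by rewrite /Kc ler1n muln_gt0 addn1 /n_edges_loop.
have K0 : 0 < Kc R e by apply: lt_le_trans K1.
have KK : (Kc R e)^-1 * Kc R e = 1 by rewrite mulVf // gt_eqF.
have Ki0 : 0 < (Kc R e)^-1 by rewrite invr_gt0.
have Ki1 : (Kc R e)^-1 <= 1 by nra.
have hmax : \big[Num.max/0]_(x <- rem 1 s) `|x| <= 1 - (Kc R e)^-1.
  elim: (rem 1 s) Hall => [|y r IH] H; first by rewrite big_nil; lra.
  rewrite big_cons ge_max H ?mem_head //= IH // => z zr.
  by apply: H; rewrite in_cons zr orbT.
have g1 : (Kc R e)^-1 <= abs_gap s by rewrite /abs_gap; lra.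
have g0 : 0 < abs_gap s by apply: lt_le_trans g1.
split => //.
rewrite /t_rel -/(Kc R e).
have gg : (abs_gap s)^-1 * abs_gap s = 1 by rewrite mulVf // gt_eqF.
have gi : 0 < (abs_gap s)^-1 by rewrite invr_gt0.
nra.
Qed.
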